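(* Suppose the collective choice problem $\mathcal C$ is Manipulable. Then for every $\delta>0$ there exists $\eta_\delta>0$ such that $Q(x,\eta_\delta)\ne\emptyset$ for all $x\in\Gamma_\delta$.
   Context: Collective choice problem $\mathcal C$: voters $N=\{1,\dots,n\}$ ($n$ odd) and an agenda setter $A$, compact metrizable policy space $X$, continuous preferences with continuous utilities $u_i$, $u_A^*=\max_X u_A$, $X_A^*=\arg\max_X u_A$. $x\succ_M y$: a strict majority of voters strictly prefer $x$ to $y$. $\mathcal C$ is Manipulable if every $x\notin X_A^*$ admits $y$ with $y\succ_A x$ and $y\succ_M x$. For $\delta>0$, $\Gamma_\delta=\{x\in X: u_A^*\ge u_A(x)+\delta\}$. For $x\in X$ and $\eta>0$, $Q(x,\eta)$ is the set of $y\in X$ such that $u_A(y)\ge u_A(x)+\eta$ and there is a strict majority $S\subseteq N$ with $u_i(y)\ge u_i(x)+\eta$ for all $i\in S$. *)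

(* Defs.v *)
From HB Require Import structures.
From mathcomp Require Import all_boot all_order all_algebra.
From mathcomp Require Import all_classical all_reals all_analysis.
Set Implicit Arguments. Unset Strict Implicit. Unset Printing Implicit Defensive.
Import Order.TTheory GRing.Theory Num.Theory.
Import numFieldNormedType.Exports.
Local Open Scope classical_set_scope.
Local Open Scope ring_scope.

Section CC.
Variables (R : realType) (X : Type) (n : nat).
(* voters are 'I_n, u i is the utility of voter i, uA the setter's utility *)
Variables (u : 'I_n -> X -> R) (uA : X -> R).

Definition strict_majority (S : {set 'I_n}) : bool := (n < 2 * #|S|)%N.

Definition maj_pref (x y : X) : Prop :=
  strict_majority [set i | u i y < u i x].

(* u_A^* = max_X u_A (the sup, which is attained under compactness/continuity) *)
Definition uAstar : R := sup (range uA).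

Definition XAstar : set X := [set x | uA x = uAstar].

Definition Manipulable : Prop :=
  forall x, ~ XAstar x -> exists y, uA x < uA y /\ maj_pref y x.

Definition Gamma (delta : R) : set X := [set x | uA x + delta <= uAstar].

Definition Q (x : X) (eta : R) : set X :=
  [set y | uA x + eta <= uA y /\
     exists S : {set 'I_n}, strict_majority S /\
       forall i, i \in S -> u i x + eta <= u i y].
End CC.

(* Main.v *)
Require Import Defs.
From HB Require Import structures.
From mathcomp Require Import all_boot all_order all_algebra.
From mathcomp Require Import all_classical all_reals all_analysis.
Import Order.TTheory GRing.Theory Num.Theory.
Import numFieldNormedType.Exports.
Local Open Scope classical_set_scope.
Local Open Scope ring_scope.
From mathcomp Require Import lra.

Theorem lemma2 (R : realType) (X : pseudoMetricType R) (n : nat)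
    (u : 'I_n -> X -> R) (uA : X -> R) :
  hausdorff_space X ->
  compact [set: X] ->
  odd n ->
  (forall i, continuous (u i)) ->
  continuous uA ->
  Manipulable u uA ->
  forall delta : R, 0 < delta ->
    exists2 eta : R, 0 < eta &
      forall x, Gamma uA delta x -> Q u uA x eta !=set0.
Proof.
move=> _ cX _ uc uAc man delta dpos.
have cG : compact (Gamma uA delta).
  apply: (subclosed_compact _ cX) => //.
  have -> : Gamma uA delta = uA @^-1` [set r | r <= uAstar uA - delta].
    by apply/seteqP; split => x /=; rewrite lerBrDr.
  by apply: preimage_closed => [x _|]; [exact: uAc | exact: closed_le].
have H : \forall e \near (0:R)^'+, Gamma uA delta `<=` (fun x' => Q u uA x' e !=set0).
  apply: (proj1 (compact_near_coveringP _) cG) => x Gx.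
  have nX : ~ XAstar uA x.
    by rewrite /XAstar /= => E; move: Gx; rewrite /Gamma /= E gerDl leNgt dpos.
  have [y [lty mp]] := man x nX.
  pose S : {set 'I_n} := [set i | u i x < u i y]%SET.
  have N1 : \forall x' \near x, uA x' < uA x + (uA y - uA x) / 2.
    apply: cvgr_lt; first exact: uAc.
    by rewrite ltrDl divr_gt0 // subr_gt0.
  have N2 : \forall x' \near x, forall i, i \in S -> u i x' < u i x + (u i y - u i x) / 2.
    apply: filter_forall => i; case: (boolP (i \in S)) => iS.
      have hp : u i x < u i x + (u i y - u i x) / 2.
        by rewrite ltrDl divr_gt0 // subr_gt0; move: iS; rewrite inE.
      have h2 : \forall t \near x, u i t < u i x + (u i y - u i x) / 2.
        by apply: cvgr_lt; [exact: uc | exact: hp].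
      by apply: filterS h2 => ? h _.
    by apply: nearW => x'' /negP.
  have E1 : \forall e \near (0:R)^'+, e < (uA y - uA x) / 2.
    apply: nbhs_right_lt; by rewrite divr_gt0 // subr_gt0.
  have E2 : \forall e \near (0:R)^'+, forall i, i \in S -> e < (u i y - u i x) / 2.
    apply: filter_forall => i; case: (boolP (i \in S)) => iS.
      have hp : (0:R) < (u i y - u i x) / 2.
        by rewrite divr_gt0 // subr_gt0; move: iS; rewrite inE.
      by apply: filterS (nbhs_right_lt hp) => x'' h _.
    by apply: nearW => x'' /negP.
  exists ([set x' | uA x' < uA x + (uA y - uA x) / 2 /\ forall i, i \in S -> u i x' < u i x + (u i y - u i x) / 2],
          [set e | e < (uA y - uA x) / 2 /\ forall i, i \in S -> e < (u i y - u i x) / 2]).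
    by split; [exact: filterI N1 N2 | exact: filterI E1 E2].
  move=> [x' e] /= [[h1 h2] [h3 h4]].
  exists y; split; first lra.
  exists S; split => // i iS.
  have := h2 i iS; have := h4 i iS; lra.
have [e [He epos]] : exists e : R, Gamma uA delta `<=` (fun x' => Q u uA x' e !=set0) /\ 0 < e.
  by apply: (@filter_ex _ ((0:R)^'+)); apply: filterI H (nbhs_right_gt 0).
by exists e.
Qed.
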